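(* Let $\varepsilon\in(0,1]$. There exists a test $T:\Delta_{BD}\to\Sigma_1$ such that (i) $P(T(P))\le\varepsilon$ for every $P\in\Delta_{BD}$, and (ii) $T$ is nonmanipulable: for every probability measure $\zeta$ on $\Delta_{BD}$ with finite support there is a cylinder $C_\zeta$ such that $\zeta(\{P\in\Delta_{BD}:\omega\notin T(P)\})=0$ for every $\omega\in C_\zeta$.
   Context: Let $\Omega=\{0,1\}^{\mathbb N}$ (paths) with the product topology; for $\omega\in\Omega$, $t\ge0$, $\omega^t$ is the cylinder of paths agreeing with $\omega$ in the first $t$ coordinates. $\Sigma$ is a fixed $\sigma$-algebra on $\Omega$ containing all cylinders; $\Sigma_1$ is the family of open subsets of $\Omega$. $\mathbb P$ is the set of finitely additive probabilities on $(\Omega,\Sigma)$. $P\in\mathbb P$ is strongly nonatomic (an ''opinion'') if for every $E\in\Sigma$ and $\alpha\in[0,1]$ there is $F\in\Sigma$, $F\subseteq E$, with $P(F)=\alpha P(E)$. For $R\in\mathbb P$ and a cylinder with $R(\omega^t)>0$, $R(E\mid\omega^t)=R(E\cap\omega^t)/R(\omega^t)$. $P$ merges with $Q$ ($P,Q\in\mathbb P$) if for every $\varepsilon>0$, $Q(\{\omega:\sup_{E\in\Sigma}|P(E\mid\omega^t)-Q(E\mid\omega^t)|>\varepsilon\})\to0$ as $t\to\infty$ (cylinders with $Q(\omega^t)>0=P(\omega^t)$ counted in the set). $Q\ll P$ means: for every sequence $(E_n)$ in $\Sigma$, $P(E_n)\to0$ implies $Q(E_n)\to0$. $P\in\mathbb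 P$ has the Blackwell–Dubins property if $P$ merges with every $Q\in\mathbb P$ satisfying $Q\ll P$. $\Delta_{BD}$ is the set of strongly nonatomic $P\in\mathbb P$ having the Blackwell–Dubins property. *)

(* Defs.v *)
From Stdlib Require Import Reals Lra List Classical ClassicalEpsilon.
Open Scope R_scope.

Definition Omega := nat -> bool.
Definition event := Omega -> Prop.

Definition cyl (w : Omega) (t : nat) : event := fun w' => forall i, (i < t)%nat -> w' i = w i.

Definition inter (E F : event) : event := fun w => E w /\ F w.
Definition union (E F : event) : event := fun w => E w \/ F w.
Definition compl (E : event) : event := fun w => ~ E w.
Definition full : event := fun _ => True.

Definition is_sigma_algebra (S : event -> Prop) : Prop :=
  S full /\ (forall E, S E -> S (compl E)) /\
  (forall En : nat -> event, (forall n, S (En n)) -> S (fun w => exists n, En n w)).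
Definition contains_cylinders (S : event -> Prop) : Prop := forall w t, S (cyl w t).

(* open sets of the product topology *)
Definition is_open (U : event) : Prop := forall w, U w -> exists t, forall w', cyl w t w' -> U w'.

(* finitely additive probabilities on (Omega, Sigma); values off Sigma irrelevant *)
Definition fa_prob (S : event -> Prop) (P : event -> R) : Prop :=
  (forall E, S E -> 0 <= P E) /\ P full = 1 /\
  (forall E F, S E -> S F -> (forall w, E w -> F w -> False) -> P (union E F) = P E + P F).

Definition strongly_nonatomic (S : event -> Prop) (P : event -> R) : Prop :=
  forall E a, S E -> 0 <= a <= 1 ->
    exists F, S F /\ (forall w, F w -> E w) /\ P F = a * P E.

Definition cond (R0 : event -> R) (E : event) (w : Omega) (t : nat) : R :=
  R0 (inter E (cyl w t)) / R0 (cyl w t).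

(* the set of paths at which P and Q are eps-far at time t (cylinders with Q>0=P counted) *)
Definition bad_set (S : event -> Prop) (P Q : event -> R) (eps : R) (t : nat) : event :=
  fun w => 0 < Q (cyl w t) /\
    (P (cyl w t) = 0 \/
     (0 < P (cyl w t) /\ exists E, S E /\ Rabs (cond P E w t - cond Q E w t) > eps)).

(* "sup_E |...| > eps" is equivalent to the existence of such an E *)
Definition merges (S : event -> Prop) (P Q : event -> R) : Prop :=
  forall eps, eps > 0 -> Un_cv (fun t => Q (bad_set S P Q eps t)) 0.

Definition abs_cont (S : event -> Prop) (Q P : event -> R) : Prop :=
  forall En : nat -> event, (forall n, S (En n)) ->
    Un_cv (fun n => P (En n)) 0 -> Un_cv (fun n => Q (En n)) 0.

Definition blackwell_dubins (S : event -> Prop) (P : event -> R) : Prop :=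
  forall Q, fa_prob S Q -> abs_cont S Q P -> merges S P Q.

Definition Delta_BD (S : event -> Prop) (P : event -> R) : Prop :=
  fa_prob S P /\ strongly_nonatomic S P /\ blackwell_dubins S P.

(* A probability measure on Delta_BD with finite support, given as a list of
   atoms (P_i, w_i) with P_i in Delta_BD, w_i > 0, sum w_i = 1. *)
Definition fin_supp_prob (S : event -> Prop) (z : list ((event -> R) * R)) : Prop :=
  (forall p, In p z -> Delta_BD S (fst p) /\ 0 < snd p) /\
  fold_right (fun p acc => snd p + acc) 0 z = 1.

Definition zeta_meas (z : list ((event -> R) * R)) (A : (event -> R) -> Prop) : R :=
  fold_right (fun p acc =>
    (if excluded_middle_informative (A (fst p)) then snd p else 0) + acc) 0 z.

(* Main.v *)
Require Import Defs.
From Stdlib Require Import Reals List Lra Lia Arith Classical ClassicalEpsilon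
  FunctionalExtensionality PropExtensionality.
Open Scope R_scope.

Lemma ev_ext (E F : event) : (forall w, E w <-> F w) -> E = F.
Proof. intros H; apply functional_extensionality; intro w; apply propositional_extensionality; apply H. Qed.

Section SigmaLemmas.
Variable S : event -> Prop.
Hypothesis HS : is_sigma_algebra S.

Lemma S_full : S full. Proof. destruct HS as [H _]; exact H. Qed.
Lemma S_compl E : S E -> S (compl E). Proof. destruct HS as [_ [H _]]; apply H. Qed.

Lemma S_empty : S (fun _ => False).
Proof.
  assert (H : compl full = (fun _ => False)).
  { apply ev_ext; unfold compl, full; tauto. }
  rewrite <- H; apply S_compl, S_full.
Qed.

Lemma S_union E F : S E -> S F -> S (union E F).
Proof.
  intros HE HF. destruct HS as [_ [_ Hu]].
  set (En := fun n : nat => match n with 0%nat => E | _ => F end).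
  assert (H : (fun w => exists n, En n w) = union E F).
  { apply ev_ext; intro w; unfold union; split.
    - intros [[|n] H]; [left|right]; exact H.
    - intros [H|H]; [exists 0%nat | exists 1%nat]; exact H. }
  rewrite <- H; apply Hu; intros [|n]; assumption.
Qed.

Lemma S_inter E F : S E -> S F -> S (inter E F).
Proof.
  intros HE HF.
  assert (H : compl (union (compl E) (compl F)) = inter E F).
  { apply ev_ext; intro w; unfold compl, union, inter; split.
    - intros H; split; apply NNPP; intro; apply H; auto.
    - intros [a b] [c|c]; auto. }
  rewrite <- H; apply S_compl, S_union; apply S_compl; assumption.
Qed.

Definition dd (n : nat) : Omega := fun i => Nat.testbit n i.

Lemma dd_surj : forall s w, exists n, forall i, (i < s)%nat -> dd n i = w i.
Proof.
  induction s; intros w.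
  - exists 0%nat; intros; lia.
  - destruct (IHs (fun i => w (Datatypes.S i))) as [n Hn].
    destruct (w 0%nat) eqn:Hw0.
    + exists (2 * n + 1)%nat; intros [|i] Hi; unfold dd.
      * rewrite Nat.testbit_odd_0; auto.
      * rewrite Nat.testbit_odd_succ by lia. apply (Hn i); lia.
    + exists (2 * n)%nat; intros [|i] Hi; unfold dd.
      * rewrite Nat.testbit_even_0; auto.
      * rewrite Nat.testbit_even_succ by lia. apply (Hn i); lia.
Qed.

Hypothesis HC : contains_cylinders S.

Lemma S_determined s (B : event) :
  (forall w w', cyl w s w' -> B w -> B w') -> S B.
Proof.
  intros HB. destruct HS as [_ [_ Hu]].
  set (En := fun n w => B (dd n) /\ cyl (dd n) s w).
  assert (H : (fun w => exists n, En n w) = B).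
  { apply ev_ext; intro w; unfold En; split.
    - intros [n [H1 H2]]. exact (HB _ _ H2 H1).
    - intros Hw. destruct (dd_surj s w) as [n Hn]. exists n. split.
      + apply (HB w); [intros i Hi; apply Hn; auto | exact Hw].
      + intros i Hi; symmetry; apply Hn; auto. }
  rewrite <- H; apply Hu. intro n.
  destruct (classic (B (dd n))) as [Hb|Hb].
  - assert (E : En n = cyl (dd n) s) by (apply ev_ext; unfold En; tauto).
    rewrite E; apply HC.
  - assert (E : En n = (fun _ => False)) by (apply ev_ext; unfold En; tauto).
    rewrite E; apply S_empty.
Qed.

Variable P : event -> R.
Hypothesis HP : fa_prob S P.

Lemma P_split E F : S E -> S F -> P E = P (inter E F) + P (inter E (compl F)).
Proof.
  intros HE HF. destruct HP as [_ [_ Hadd]].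
  assert (Hx : union (inter E F) (inter E (compl F)) = E).
  { apply ev_ext; intro w; unfold union, inter, compl; split.
    - intros [[a _]|[a _]]; auto.
    - intros a; destruct (classic (F w)); auto. }
  pose proof (Hadd (inter E F) (inter E (compl F)) (S_inter _ _ HE HF)
               (S_inter _ _ HE (S_compl _ HF))) as H.
  rewrite Hx in H. apply H. unfold inter, compl; tauto.
Qed.

Lemma P_mono X Y : S X -> S Y -> (forall w, Y w -> X w) -> P Y <= P X.
Proof.
  intros HX HY Hs. rewrite (P_split X Y HX HY).
  assert (Hx : inter X Y = Y) by (apply ev_ext; unfold inter; firstorder).
  rewrite Hx. destruct HP as [Hnn _].
  pose proof (Hnn _ (S_inter _ _ HX (S_compl _ HY))). lra.
Qed.

Lemma P_le1 E : S E -> P E <= 1.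
Proof.
  intros HE. destruct HP as [_ [H1 _]]. rewrite <- H1.
  apply P_mono; auto. apply S_full. unfold full; auto.
Qed.

Lemma P_nn E : S E -> 0 <= P E.
Proof. destruct HP as [H _]; apply H. Qed.

End SigmaLemmas.

Lemma cyl_mono w s t : (t <= s)%nat -> forall w', cyl w s w' -> cyl w t w'.
Proof. intros Hts w' H i Hi; apply H; lia. Qed.

Lemma cyl_eq w w' s : cyl w s w' -> cyl w s = cyl w' s.
Proof.
  intros H; apply ev_ext; intro x; unfold cyl in *; split; intros Hx i Hi;
  rewrite Hx by auto; [symmetry|]; rewrite H by auto; auto.
Qed.

Lemma key (S : event -> Prop) (HS : is_sigma_algebra S) (HC : contains_cylinders S)
  (P : event -> R) (HP : Delta_BD S P) (w0 : Omega) (eps : R) (He : 0 < eps) :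
  exists t, P (cyl w0 t) <= eps.
Proof.
  destruct HP as [HPf [HPn HPb]].
  apply NNPP; intro Hno.
  assert (Hgt : forall t, eps < P (cyl w0 t)).
  { intro t; apply Rnot_le_lt; intro; apply Hno; eauto. }
  set (u := fun t => P (cyl w0 t)).
  destruct (completeness (fun x => exists t, x = - u t)) as [m [Hub Hlub]].
  { exists (-eps). intros x [t ->]. unfold u; specialize (Hgt t); lra. }
  { exists (- u 0%nat); eauto. }
  set (c := - m).
  assert (Hc1 : forall t, c <= u t).
  { intro t. specialize (Hub (- u t) (ex_intro _ t eq_refl)). unfold c; lra. }
  assert (Hc2 : eps <= c).
  { assert (m <= - eps). { apply Hlub. intros x [t ->]. unfold u; specialize (Hgt t); lra. }
    unfold c; lra. }
  assert (Ht : exists t, u t < 4/3 * c).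
  { apply NNPP; intro H.
    assert (m <= -(4/3*c)).
    { apply Hlub; intros x [t ->]. assert (~ u t < 4/3*c) by eauto. lra. }
    unfold c in *; lra. }
  destruct Ht as [t Ht].
  destruct (HPn (cyl w0 t) (1/2) (HC w0 t)) as [F [HF [HFsub HPF]]]; [lra|].
  assert (HPF0 : 0 < P F) by (rewrite HPF; specialize (Hgt t); unfold u in Ht; lra).
  assert (HPF1 : P F <= 1) by (apply (P_le1 S HS P HPf); auto).
  assert (HAt : P (inter (cyl w0 t) (compl F)) = 1/2 * u t).
  { pose proof (P_split S HS P HPf (cyl w0 t) F (HC _ _) HF) as H.
    assert (Hx : inter (cyl w0 t) F = F) by (apply ev_ext; unfold inter; firstorder).
    rewrite Hx in H. unfold u. lra. }
  assert (Hab : forall s, (t <= s)%nat ->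
     c/3 <= P (inter (cyl w0 s) F) /\ c/3 <= P (inter (cyl w0 s) (compl F))).
  { intros s Hs.
    pose proof (P_split S HS P HPf (cyl w0 s) F (HC _ _) HF) as H.
    assert (H1 : P (inter (cyl w0 s) (compl F)) <= P (inter (cyl w0 t) (compl F))).
    { apply (P_mono S HS P HPf).
      - apply (S_inter S HS); [apply HC | apply (S_compl S HS); auto].
      - apply (S_inter S HS); [apply HC | apply (S_compl S HS); auto].
      - intros w [a b]; split; auto. eapply cyl_mono; eauto. }
    assert (H2 : P (inter (cyl w0 s) F) <= P F).
    { apply (P_mono S HS P HPf); auto. apply (S_inter S HS); auto.
      intros w [a b]; auto. }
    specialize (Hc1 s). unfold u in *. lra. }
  set (Q := fun E => P (inter E F) / P F).
  assert (HQ : fa_prob S Q).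
  { destruct HPf as [Hnn [H1 Hadd]]. split; [|split].
    - intros E HE. unfold Q, Rdiv. apply Rmult_le_pos.
      + apply Hnn, (S_inter S HS); auto.
      + left; apply Rinv_0_lt_compat; auto.
    - unfold Q. assert (Hx : inter full F = F) by (apply ev_ext; unfold inter, full; tauto).
      rewrite Hx. field. lra.
    - intros E1 E2 HE1 HE2 Hd. unfold Q.
      assert (Hx : inter (union E1 E2) F = union (inter E1 F) (inter E2 F))
        by (apply ev_ext; unfold inter, union; tauto).
      rewrite Hx, Hadd.
      + field; lra.
      + apply (S_inter S HS); auto.
      + apply (S_inter S HS); auto.
      + intros w [a _] [b _]; eauto. }
  assert (HQac : abs_cont S Q P).
  { intros En HEn Hcv e He'. destruct (Hcv (e * P F)) as [N HN].
    { apply Rmult_lt_0_compat; auto. }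
    exists N; intros n Hn. specialize (HN n Hn). unfold R_dist in *.
    rewrite Rminus_0_r in *.
    assert (Hq : Q (En n) * P F = P (inter (En n) F)) by (unfold Q; field; lra).
    assert (Hm : P (inter (En n) F) <= P (En n)).
    { apply (P_mono S HS P HPf); auto. apply (S_inter S HS); auto. intros w [a _]; auto. }
    assert (Hn0 : 0 <= P (inter (En n) F)) by (apply (P_nn S P HPf), (S_inter S HS); auto).
    assert (Hq0 : 0 <= Q (En n)) by (destruct HQ as [Hnn _]; apply Hnn; auto).
    rewrite Rabs_pos_eq in * by lra.
    try rewrite Rabs_pos_eq in HN by (apply (P_nn S P HPf); auto).
    nra. }
  pose proof (HPb Q HQ HQac (c/6)) as Hm.
  destruct (Hm ltac:(lra) (c/3)) as [N HN]; [lra|].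
  set (s := Nat.max N t).
  specialize (HN s (Nat.le_max_l _ _)). unfold R_dist in HN. rewrite Rminus_0_r in HN.
  destruct (Hab s (Nat.le_max_r _ _)) as [Ha Hb].
  set (B := bad_set S P Q (c/6) s).
  assert (HBdet : forall w w', cyl w s w' -> B w -> B w').
  { intros w w' Hw. unfold B, bad_set, cond. rewrite (cyl_eq _ _ _ Hw). auto. }
  assert (HBS : S B) by (apply (S_determined S HS HC s); auto).
  assert (HB0 : B w0).
  { unfold B, bad_set, cond. split.
    - unfold Q, Rdiv. apply Rmult_lt_0_compat; [lra | apply Rinv_0_lt_compat; auto].
    - right. split. { specialize (Hgt s); lra. }
      exists F. split; auto.
      assert (E1 : inter (inter F (cyl w0 s)) F = inter (cyl w0 s) F)
        by (apply ev_ext; unfold inter; tauto).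
      assert (E2 : inter F (cyl w0 s) = inter (cyl w0 s) F)
        by (apply ev_ext; unfold inter; tauto).
      unfold Q. rewrite E1, E2.
      pose proof (P_split S HS P HPf (cyl w0 s) F (HC _ _) HF) as Hsp.
      set (x := P (inter (cyl w0 s) F)) in *.
      set (y := P (inter (cyl w0 s) (compl F))) in *.
      rewrite Hsp.
      assert (Hu1 : x + y <= 1) by (rewrite <- Hsp; apply (P_le1 S HS P HPf); auto).
      replace (x / (x + y) - x / P F / (x / P F)) with (- (y / (x + y))) by (field; lra).
      rewrite Rabs_Ropp, Rabs_pos_eq.
      + assert (y / (x + y) >= y).
        { apply Rle_ge; unfold Rdiv; rewrite <- (Rmult_1_r y) at 1.
          apply Rmult_le_compat_l; [lra|]. rewrite <- Rinv_1.
          apply Rinv_le_contravar; lra. }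
        lra.
      + unfold Rdiv; apply Rmult_le_pos; [lra | left; apply Rinv_0_lt_compat; lra]. }
  assert (HQB : Q (cyl w0 s) <= Q B).
  { unfold Q, Rdiv. apply Rmult_le_compat_r; [left; apply Rinv_0_lt_compat; auto|].
    apply (P_mono S HS P HPf); try (apply (S_inter S HS); auto).
    intros w [a b]; split; auto. exact (HBdet w0 w a HB0). }
  assert (HQs : c/3 <= Q (cyl w0 s)).
  { unfold Q. apply (Rle_trans _ (P (inter (cyl w0 s) F))); auto.
    unfold Rdiv. rewrite <- (Rmult_1_r (P (inter _ _))) at 1.
    apply Rmult_le_compat_l; [lra|]. rewrite <- Rinv_1.
    apply Rinv_le_contravar; lra. }
  fold B in HN. rewrite Rabs_pos_eq in HN by lra. lra.
Qed.

Theorem theorem3 (Sigma : event -> Prop)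
  (HS : is_sigma_algebra Sigma) (HC : contains_cylinders Sigma)
  (eps : R) (Heps : 0 < eps <= 1) :
  exists T : (event -> R) -> event,
    (forall P, Delta_BD Sigma P -> is_open (T P)) /\
    (forall P, Delta_BD Sigma P -> P (T P) <= eps) /\
    (forall z, fin_supp_prob Sigma z ->
       exists w0 t0, forall w, cyl w0 t0 w ->
         zeta_meas z (fun P => Delta_BD Sigma P /\ ~ T P w) = 0).
Proof.
  set (w0 := fun _ : nat => false).
  set (tP := fun P : event -> R =>
    match excluded_middle_informative (exists t, P (cyl w0 t) <= eps) with
    | left H => proj1_sig (constructive_indefinite_description _ H)
    | right _ => 0%nat end).
  exists (fun P => cyl w0 (tP P)). split; [|split].
  - intros P _ w Hw. exists (tP P). intros w' Hw' i Hi.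
    rewrite Hw' by auto. apply Hw; auto.
  - intros P HP. unfold tP. destruct excluded_middle_informative as [H|H].
    + destruct (constructive_indefinite_description _ H) as [t Ht]; simpl; exact Ht.
    + exfalso; apply H; apply (key Sigma HS HC P HP w0 eps); lra.
  - intros z _. exists w0, (fold_right (fun p acc => Nat.max (tP (fst p)) acc) 0%nat z).
    intros w Hw. unfold zeta_meas. induction z as [|a z IH]; simpl in *; auto.
    destruct excluded_middle_informative as [[_ Hn]|_].
    + exfalso; apply Hn. eapply cyl_mono; [|exact Hw]. apply Nat.le_max_l.
    + rewrite IH; [lra|]. eapply cyl_mono; [|exact Hw]. apply Nat.le_max_r.
Qed.
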